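(* Let $0<r\le 1/2$, $0\le\rho\le 1$, and let $\alpha$ satisfy $0\le\alpha<r$, with $\alpha$ the asymptotic red edge fraction of the Biased Preferential Attachment Model described in the context. Define $$K_B=\frac12\left(\frac{r\rho}{\alpha+\rho(1-\alpha)}+\frac{1-r}{\alpha\rho+1-\alpha}\right),\qquad \beta_B=1+\frac{1}{K_B}.$$ Then $\beta_B>2$.
   Context: In the BPAM, nodes arrive sequentially and are labeled red with probability $r$ (minority, $0<r\le1/2$) or blue with probability $1-r$. Each new node attaches by preferential attachment, with a cross-label edge accepted only with probability $\rho\in[0,1]$ (retrying otherwise), and every node has outdegree $d$. $\alpha$ denotes the limit as $N\to\infty$ of the expected fraction of the total degree $2Nd$ belonging to red nodes. It satisfies the power inequality $\alpha<r$. $\beta_B$ is the power-law exponent of the blue community's asymptotic degree distribution, i.e. the number of blue nodes of degree at least $k$ scales as $k^{-\beta_B}$. *)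

(* Defs.v *)
From mathcomp Require Import all_boot all_order all_algebra.
Set Implicit Arguments. Unset Strict Implicit. Unset Printing Implicit Defensive.
Import Order.TTheory GRing.Theory Num.Theory.
Local Open Scope ring_scope.

Definition K_B (R : realFieldType) (r rho alpha : R) : R :=
  2^-1 * (r * rho / (alpha + rho * (1 - alpha))
          + (1 - r) / (alpha * rho + 1 - alpha)).

(* beta_B = 1 + 1 / K_B : power-law exponent of the blue community *)
Definition beta_B (R : realFieldType) (r rho alpha : R) : R :=
  1 + (K_B r rho alpha)^-1.

(* Main.v *)
Require Import Defs.
From mathcomp Require Import all_boot all_order all_algebra.
From mathcomp Require Import lra.
Import Order.TTheory GRing.Theory Num.Theory.
Local Open Scope ring_scope.

Theorem proposition4 (R : realFieldType) (r rho alpha : R) :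
  0 < r -> r <= 2^-1 -> 0 <= rho -> rho <= 1 ->
  0 <= alpha -> alpha < r ->
  2 < beta_B r rho alpha.
Proof.
move=> r0 rh r0' r1 a0 ar.
rewrite /beta_B /K_B.
set D1 := alpha + rho * (1 - alpha).
set D2 := alpha * rho + 1 - alpha.
have hD2 : 1 - alpha <= D2 by rewrite /D2; nra.
have hD2p : 0 < D2 by lra.
have hb0 : 0 < (1 - r) / D2 by apply: divr_gt0; lra.
have hb1 : (1 - r) / D2 < 1.
  by rewrite ltr_pdivrMr // mul1r; lra.
have ha0 : 0 <= r * rho / D1.
  by apply: divr_ge0; rewrite /D1; nra.
have ha1 : r * rho / D1 <= 2^-1.
  have [->|rp] := eqVneq rho 0; first by rewrite mulr0 mul0r; lra.
  have rp' : 0 < rho by rewrite lt_def rp r0'.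
  have hD1 : rho <= D1 by rewrite /D1; nra.
  rewrite ler_pdivrMr; last lra.
  nra.
set a := r * rho / D1 in ha0 ha1 *.
set b := (1 - r) / D2 in hb0 hb1 *.
have k0 : 0 < 2^-1 * (a + b) by lra.
have k1 : 2^-1 * (a + b) < 1 by lra.
have : 1 < (2^-1 * (a + b))^-1.
  by rewrite -[1](@invr1 R) ltf_pV2 // ?posrE; lra.
lra.
Qed.
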